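(* Let $l\ge0$ be an integer and, for $\zeta,\eta>0$, let $$\mathcal{G}_0(\zeta,\eta)=\frac{\eta^{l+1}\zeta^{-l}-\zeta^{l+1}\eta^{-l}}{2l+1},\qquad H_0(\zeta)=\sqrt{\tfrac{2}{\pi}}\,e^{\zeta}\zeta^{1/2}K_{l+1/2}(\zeta),$$ where $K_{l+1/2}$ is the modified Bessel function of the second kind. Then for every $\zeta>0$, $$\int_\zeta^\infty e^{-\eta+\zeta}\mathcal{G}_0(\zeta,\eta)\frac{H_0(\eta)}{H_0(\zeta)}d\eta=1,\qquad \int_\zeta^\infty e^{-\eta+\zeta}\,\partial_\zeta\mathcal{G}_0(\zeta,\eta)\frac{H_0(\eta)}{H_0(\zeta)}d\eta=-1+\frac{H_0'(\zeta)}{H_0(\zeta)}.$$ *)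

(* Defs.v *)
From Stdlib Require Import Reals.
From Coquelicot Require Import Coquelicot.
Open Scope R_scope.

(* Modified Bessel function of the second kind, defined (for x > 0) by the
   standard integral representation K_nu(x) = int_0^oo exp(-x cosh t) cosh(nu t) dt
   (DLMF 10.32.9). *)
Definition BesselK (nu x : R) : R :=
  RInt_gen (fun t => exp (- x * cosh t) * cosh (nu * t))
           (at_point 0) (Rbar_locally p_infty).

Definition G0 (l : nat) (zeta eta : R) : R :=
  (eta ^ (l + 1) / zeta ^ l - zeta ^ (l + 1) / eta ^ l) / (2 * INR l + 1).

Definition H0 (l : nat) (zeta : R) : R :=
  sqrt (2 / PI) * exp zeta * sqrt zeta * BesselK (INR l + / 2) zeta.

(* Main.v *)
Require Import Defs.
From Stdlib Require Import Reals Lra Lia ClassicalEpsilon.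
From Coquelicot Require Import Coquelicot.
Open Scope R_scope.

Lemma exp_le' x y : x <= y -> exp x <= exp y.
Proof. intros [H|H]. left; now apply exp_increasing. subst; lra. Qed.

Lemma ball0 (eps : posreal) (y : R) : Rabs y < eps -> ball 0 eps y.
Proof.
  intros H. unfold ball; simpl; unfold AbsRing_ball, abs, minus, plus, opp; simpl.
  now replace (y + - 0) with y by ring.
Qed.

Lemma lim0_bound (g : R -> R) (K T : R) :
  (forall t, T < t -> Rabs (g t) <= K / t) ->
  filterlim g (Rbar_locally p_infty) (locally 0).
Proof.
  intros H. apply filterlim_locally. intros eps.
  exists (Rmax (Rmax T 1) (Rabs K / eps + 1)). intros t Ht.
  apply ball0.
  assert (H1 : T < t) by (eapply Rle_lt_trans; [|exact Ht]; eauto using Rmax_l, Rle_trans, Rmax_l).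
  assert (H2 : 1 < t) by (eapply Rle_lt_trans; [|exact Ht];
                          eapply Rle_trans; [apply Rmax_r|apply Rmax_l]).
  assert (H3 : Rabs K / eps + 1 < t) by (eapply Rle_lt_trans; [apply Rmax_r|exact Ht]).
  eapply Rle_lt_trans. apply H; auto.
  destruct eps as [e he]; simpl in *.
  apply Rle_lt_trans with (Rabs K / t).
  { unfold Rdiv. apply Rmult_le_compat_r. left; apply Rinv_0_lt_compat; lra. apply Rle_abs. }
  apply (Rmult_lt_reg_r t). lra.
  unfold Rdiv. rewrite Rmult_assoc, Rinv_l by lra. rewrite Rmult_1_r.
  assert (Rabs K / e < t - 1) by lra.
  assert (Rabs K < e * (t - 1)).
  { apply (Rmult_lt_reg_r (/ e)). apply Rinv_0_lt_compat; lra.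
    replace (e * (t - 1) * / e) with (t - 1) by (field; lra). exact H0. }
  nra.
Qed.

Lemma antideriv (F f : R -> R) (a0 a L : R) :
  a0 < a ->
  (forall x, a0 < x -> is_derive F x (f x)) ->
  (forall x, a0 < x -> continuous f x) ->
  filterlim F (Rbar_locally p_infty) (locally L) ->
  is_RInt_gen f (at_point a) (Rbar_locally p_infty) (L - F a).
Proof.
  intros Ha HD HC HL.
  apply is_RInt_gen_ext with (Derive F).
  { apply Filter_prod with (fun x => x = a) (fun b => a < b).
    - reflexivity.
    - exists a. auto.
    - intros x y -> Hy z Hz. simpl in Hz.
      rewrite Rmin_left in Hz by lra.
      apply is_derive_unique, HD. lra. }
  apply is_RInt_gen_Derive.
  - apply Filter_prod with (fun x => x = a) (fun b => a < b).
    + reflexivity.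
    + exists a. auto.
    + intros x y -> Hy z Hz. simpl in Hz.
      rewrite Rmin_left in Hz by lra.
      eexists. apply HD. lra.
  - apply Filter_prod with (fun x => x = a) (fun b => a < b).
    + reflexivity.
    + exists a. auto.
    + intros x y -> Hy z Hz. simpl in Hz.
      rewrite Rmin_left in Hz by lra.
      apply continuous_ext_loc with f.
      * apply filter_imp with (fun u => a0 < u).
        { intros u Hu. symmetry. apply is_derive_unique, HD. exact Hu. }
        apply open_gt. lra.
      * apply HC. lra.
  - intros P HP. unfold filtermap, at_point. now apply locally_singleton.
  - exact HL.
Qed.

Lemma exRc (f : R -> R) a b : (forall z, Rmin a b <= z <= Rmax a b -> continuous f z) -> ex_RInt f a b.
Proof. apply (ex_RInt_continuous (V:=R_CompleteNormedModule)). Qed.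
Lemma contD (f : R -> R) x : ex_derive f x -> continuous f x.
Proof. apply (ex_derive_continuous (K:=R_AbsRing) (V:=R_NormedModule)). Qed.

Ltac toR := match goal with |- ?a = ?b => change (@eq R a b) end.

Definition gf (w : R) := exp (- (w * w)).
Definition Gam (c : R) := RInt gf 0 c.

Lemma gf_cont x : continuous gf x.
Proof. apply contD. unfold gf. auto_derive. auto. Qed.

Lemma gf_ex a b : ex_RInt gf a b.
Proof. apply exRc. intros; apply gf_cont. Qed.

Lemma Gam_der c : is_derive Gam c (gf c).
Proof.
  apply is_derive_RInt with 0.
  - apply filter_forall. intros b. apply RInt_correct, gf_ex.
  - apply gf_cont.
Qed.

Lemma Gam_diff u v : Gam v - Gam u = RInt gf u v.
Proof.
  unfold Gam. rewrite <- (RInt_Chasles gf 0 u v) by apply gf_ex.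
  simpl. unfold plus; simpl. ring.
Qed.

Lemma Gam_bound u v : 1 <= u <= v -> 0 <= Gam v - Gam u <= exp (- u).
Proof.
  intros [Hu Hv]. rewrite Gam_diff. split.
  - rewrite <- (RInt_point u (fun _ => 0)) at 1.
    replace (RInt (fun _ : R => 0) u u) with (RInt (fun _ : R => 0) u v).
    2:{ rewrite !RInt_const. simpl. unfold scal; simpl; unfold mult; simpl. ring. }
    apply RInt_le; auto. apply ex_RInt_const. apply gf_ex.
    intros. unfold gf. left; apply exp_pos.
  - apply Rle_trans with (RInt (fun w => exp (- w)) u v).
    + apply RInt_le; auto. apply gf_ex.
      apply exRc. intros. apply contD. auto_derive. auto.
      intros x Hx. unfold gf. apply exp_le'. nra.
    + assert (is_RInt (fun w => exp (- w)) u v (minus (- exp (- v)) (- exp (- u)))).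
      { apply (is_RInt_derive (V:=R_CompleteNormedModule) (fun w => - exp (- w))). intros x _. auto_derive. auto. ring.
        intros. apply contD. auto_derive. auto. }
      rewrite (is_RInt_unique _ _ _ _ H). unfold minus, plus, opp; simpl.
      pose proof (exp_pos (- v)). lra.
Qed.

Lemma Gam_cvg : exists G, filterlim Gam (Rbar_locally p_infty) (locally G).
Proof.
  apply (filterlim_locally_cauchy (U := R_CompleteSpace) (F := Rbar_locally p_infty)).
  intros [e he]. exists (fun t => Rmax 1 (1 - ln e) < t). split.
  { exists (Rmax 1 (1 - ln e)). auto. }
  assert (key : forall u v, Rmax 1 (1 - ln e) < u -> u <= v -> Rabs (Gam v - Gam u) < e).
  { intros u v Hu Huv.
    assert (1 < u) by (eapply Rle_lt_trans; [apply Rmax_l|exact Hu]).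
    assert (1 - ln e < u) by (eapply Rle_lt_trans; [apply Rmax_r|exact Hu]).
    destruct (Gam_bound u v) as [B1 B2]; [lra|].
    rewrite Rabs_pos_eq by lra.
    eapply Rle_lt_trans; [exact B2|].
    rewrite <- (exp_ln e he). apply exp_increasing. lra. }
  intros u v Hu Hv. unfold ball; simpl; unfold AbsRing_ball, abs, minus, plus, opp; simpl.
  destruct (Rle_dec u v).
  - apply key; auto.
  - rewrite <- Rabs_Ropp. replace (- (Gam v + - Gam u)) with (Gam u - Gam v) by ring.
    apply key; auto. lra.
Qed.

Lemma Gam1_pos : 0 < Gam 1.
Proof.
  apply Rlt_le_trans with (exp (-1)). apply exp_pos.
  replace (exp (-1)) with (RInt (fun _ => exp (-1)) 0 1).
  2:{ rewrite RInt_const. unfold scal; simpl; unfold mult; simpl. ring. }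
  apply RInt_le. lra. apply ex_RInt_const. apply gf_ex.
  intros x Hx. unfold gf. apply exp_le'. nra.
Qed.

Definition Gc : R := proj1_sig (constructive_indefinite_description _ Gam_cvg).

Lemma Gc_lim : filterlim Gam (Rbar_locally p_infty) (locally Gc).
Proof. unfold Gc. destruct (constructive_indefinite_description _ Gam_cvg). simpl. exact f. Qed.

Lemma Gc_pos : 0 < Gc.
Proof.
  apply Rlt_le_trans with (Gam 1). apply Gam1_pos.
  assert (H := filterlim_le (F := Rbar_locally p_infty) (fun _ => Gam 1) Gam (Gam 1) Gc).
  simpl in H. apply H.
  - exists 1. intros c Hc. destruct (Gam_bound 1 c); lra.
  - apply filterlim_const.
  - apply Gc_lim.
Qed.

Definition c0 (x : R) := exp (- x) * sqrt (2 / x) * Gc.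

Lemma cosh_e y : cosh y = (exp y + exp (- y)) / 2.
Proof. reflexivity. Qed.

Lemma exp_half t : exp t = exp (t/2) * exp (t/2).
Proof. rewrite <- exp_plus. f_equal. field. Qed.

Lemma bessel_base x : 0 < x ->
  is_RInt_gen (fun t => exp (- x * cosh t) * cosh ((INR 0 + / 2) * t))
    (at_point 0) (Rbar_locally p_infty) (c0 x).
Proof.
  intros Hx.
  set (phi := fun t => sqrt (2 * x) * (exp (t/2) - exp (- (t/2))) / 2).
  set (F := fun t => exp (- x) * sqrt (2 / x) * Gam (phi t)).
  assert (Hs2 : 0 < sqrt (2 * x)) by (apply sqrt_lt_R0; lra).
  assert (Hs : sqrt (2 / x) * sqrt (2 * x) = 2).
  { rewrite <- sqrt_mult_alt. replace (2 / x * (2 * x)) with (2 * 2) by (field; lra).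
    rewrite sqrt_square; lra. apply Rlt_le, Rdiv_lt_0_compat; lra. }
  assert (HF0 : F 0 = 0).
  { assert (phi 0 = 0) as Hp.
    { unfold phi. replace (0/2) with 0 by field. rewrite Ropp_0. field. }
    unfold F. rewrite Hp. unfold Gam. rewrite RInt_point. unfold zero; simpl. ring. }
  assert (Hphi : forall t : R, is_derive (fun y : R => phi y) t (sqrt (2 * x) * (exp (t/2) + exp (- (t/2))) / 4)).
  { intros t. unfold phi. auto_derive. auto. unfold Rdiv. field. }
  replace (c0 x) with (c0 x - F 0) by (rewrite HF0; ring).
  apply antideriv with (-1); [lra| | |].
  - intros t _. unfold F.
    auto_derive.
    { split. eexists. apply Gam_der. split; auto. eexists. apply (Hphi t). }
    rewrite (is_derive_unique _ _ _ (Hphi t)).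
    rewrite (is_derive_unique (fun x0 => Gam x0) _ _ (Gam_der _)).
    assert (HD : exp (- x) * gf (phi t) = exp (- x * cosh t)).
    { unfold gf. rewrite <- exp_plus. f_equal. unfold phi.
      assert (E1 : exp t = exp (t/2) * exp (t/2)) by apply exp_half.
      assert (E2 : exp (- t) = / (exp (t/2) * exp (t/2))) by (rewrite exp_Ropp; now rewrite E1).
      assert (E3 : exp (- (t/2)) = / exp (t/2)) by apply exp_Ropp.
      rewrite cosh_e, E1, E2, E3.
      assert (Hss: sqrt (2*x) * sqrt (2*x) = 2*x) by (apply sqrt_sqrt; lra).
      assert (0 < exp (t/2)) by apply exp_pos.
      set (s := sqrt (2*x)) in *. set (E := exp (t/2)) in *.
      transitivity (-x - (s*s) * (E - /E)*(E - /E)/4). field; lra.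
      rewrite Hss. field. lra. }
    replace ((INR 0 + / 2) * t) with (t / 2) by (simpl; field).
    rewrite <- HD. rewrite cosh_e. unfold phi.
    replace (sqrt (2 / x)) with (2 / sqrt (2 * x)) by (field_simplify_eq; lra).
    field. lra.
  - intros t _. apply contD. unfold cosh. auto_derive. auto.
  - unfold F. apply filterlim_comp with (locally Gc).
    2:{ unfold c0. apply (contD (fun g => exp (- x) * sqrt (2 / x) * g) Gc). auto_derive. auto. }
    apply filterlim_comp with (Rbar_locally p_infty).
    2: exact Gc_lim.
    intros P [M HM]. unfold filtermap.
    exists (Rmax 0 (4 * M / sqrt (2 * x))). intros t Ht. apply HM.
    assert (0 < t) by (eapply Rle_lt_trans; [apply Rmax_l|exact Ht]).
    assert (4 * M / sqrt (2 * x) < t) by (eapply Rle_lt_trans; [apply Rmax_r|exact Ht]).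
    assert (1 + t/2 <= exp (t/2)) by apply exp_ineq1_le.
    assert (exp (- (t/2)) <= 1).
    { rewrite <- exp_0. apply exp_le'. lra. }
    assert (M < sqrt (2 * x) * t / 4).
    { apply (Rmult_lt_reg_r (/ sqrt (2 * x) * 4)).
      apply Rmult_lt_0_compat; [apply Rinv_0_lt_compat|]; lra.
      replace (sqrt (2 * x) * t / 4 * (/ sqrt (2 * x) * 4)) with t by (field; lra).
      replace (M * (/ sqrt (2 * x) * 4)) with (4 * M / sqrt (2 * x)) by (field; lra). lra. }
    unfold phi. apply Rlt_le_trans with (sqrt (2 * x) * t / 4); auto.
    apply Rmult_le_reg_r with 2. lra.
    replace (sqrt (2 * x) * (exp (t / 2) - exp (- (t / 2))) / 2 * 2)
      with (sqrt (2 * x) * (exp (t / 2) - exp (- (t / 2)))) by field.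
    replace (sqrt (2 * x) * t / 4 * 2) with (sqrt (2 * x) * (t / 2)) by field.
    apply Rmult_le_compat_l; lra.
Qed.

Lemma exp_sq_bound t : 0 <= t -> t * t / 4 <= exp t.
Proof.
  intros Ht. rewrite exp_half.
  assert (1 + t/2 <= exp (t/2)) by apply exp_ineq1_le.
  apply Rle_trans with ((1 + t/2) * (1 + t/2)). nra.
  apply Rmult_le_compat; lra.
Qed.

Lemma bessel_rec x nu A B : 0 < x -> 0 <= nu ->
  is_RInt_gen (fun t => exp (- x * cosh t) * cosh ((nu - 1) * t)) (at_point 0) (Rbar_locally p_infty) A ->
  is_RInt_gen (fun t => exp (- x * cosh t) * cosh (nu * t)) (at_point 0) (Rbar_locally p_infty) B ->
  is_RInt_gen (fun t => exp (- x * cosh t) * cosh ((nu + 1) * t)) (at_point 0) (Rbar_locally p_infty)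
    (A + 2 * nu / x * B).
Proof.
  intros Hx Hnu HA HB.
  set (g := fun t => (exp (nu * t) - exp (- (nu * t))) / 2 * exp (- x * cosh t)).
  set (dg := fun t => nu * ((exp (nu * t) + exp (- (nu * t))) / 2) * exp (- x * cosh t)
                  - x * ((exp (nu * t) - exp (- (nu * t))) / 2) * ((exp t - exp (- t)) / 2)
                    * exp (- x * cosh t)).
  assert (Hg0 : g 0 = 0).
  { unfold g. rewrite Rmult_0_r, Ropp_0. field. }
  assert (HI : is_RInt_gen dg (at_point 0) (Rbar_locally p_infty) (0 - g 0)).
  { apply antideriv with (-1); [lra| | |].
    - intros t _. unfold g, dg, cosh. auto_derive. auto. unfold Rdiv. ring.
    - intros t _. apply contD. unfold dg, cosh. auto_derive. auto.
    - apply lim0_bound with 1 (Rmax 1 (8 * (nu + 1) / x)).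
      intros t Ht.
      assert (H1 : 1 < t) by (eapply Rle_lt_trans; [apply Rmax_l|exact Ht]).
      assert (H2 : 8 * (nu + 1) / x < t) by (eapply Rle_lt_trans; [apply Rmax_r|exact Ht]).
      assert (H3 : 8 * (nu + 1) < x * t).
      { apply (Rmult_lt_reg_r (/ x)). apply Rinv_0_lt_compat; lra.
        replace (x * t * / x) with t by (field; lra). exact H2. }
      assert (Hc : t * t / 8 <= cosh t).
      { unfold cosh. pose proof (exp_sq_bound t). pose proof (exp_pos (- t)). lra. }
      assert (Ha : 1 <= exp (nu * t)).
      { rewrite <- exp_0. apply exp_le'. nra. }
      assert (Hia : 0 < exp (- (nu * t)) <= 1).
      { split. apply exp_pos. rewrite <- exp_0. apply exp_le'. nra. }
      unfold g.
      rewrite Rabs_pos_eq.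
      2:{ apply Rmult_le_pos. lra. left; apply exp_pos. }
      apply Rle_trans with (exp (nu * t) * exp (- x * cosh t)).
      { apply Rmult_le_compat_r. left; apply exp_pos. lra. }
      rewrite <- exp_plus.
      apply Rle_trans with (exp (- t)).
      { apply exp_le'. nra. }
      rewrite exp_Ropp. unfold Rdiv. rewrite Rmult_1_l.
      apply Rinv_le_contravar. lra.
      pose proof (exp_ineq1_le t). lra. }
  rewrite Hg0 in HI.
  assert (HS1 := is_RInt_gen_scal _ (2 * nu / x) _ HB).
  assert (HS2 := is_RInt_gen_scal _ (- 2 / x) _ HI).
  assert (HP := is_RInt_gen_plus _ _ _ _ (is_RInt_gen_plus _ _ _ _ HA HS1) HS2).
  replace (A + 2 * nu / x * B) with (plus (plus A (scal (2 * nu / x) B)) (scal (- 2 / x) (0 - 0))).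
  2:{ unfold plus, scal; simpl; unfold mult; simpl. ring. }
  eapply is_RInt_gen_ext; [|exact HP].
  apply filter_forall. intros ab t _.
  unfold plus, scal; simpl; unfold mult; simpl. unfold dg.
  set (c := exp (- x * cosh t)).
  assert (ea : 0 < exp (nu * t)) by apply exp_pos.
  assert (eb : 0 < exp t) by apply exp_pos.
  assert (E1 : exp ((nu + 1) * t) = exp (nu * t) * exp t).
  { rewrite <- exp_plus. f_equal. ring. }
  assert (E2 : exp (- ((nu + 1) * t)) = / (exp (nu * t) * exp t)).
  { rewrite exp_Ropp. now rewrite E1. }
  assert (E3 : exp ((nu - 1) * t) = exp (nu * t) / exp t).
  { unfold Rdiv. rewrite <- exp_Ropp, <- exp_plus. f_equal. ring. }
  assert (E4 : exp (- ((nu - 1) * t)) = exp t / exp (nu * t)).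
  { rewrite exp_Ropp, E3. field; lra. }
  rewrite !cosh_e, E1, E2, E3, E4, !exp_Ropp.
  field. lra.
Qed.

Fixpoint qq (n : nat) (x : R) : R * R :=
  match n with
  | O => (1, 1)
  | S m => (snd (qq m x), fst (qq m x) + (2 * INR m + 1) / x * snd (qq m x))
  end.

Lemma bessel_all x n : 0 < x ->
  is_RInt_gen (fun t => exp (- x * cosh t) * cosh ((INR n + / 2 - 1) * t))
    (at_point 0) (Rbar_locally p_infty) (c0 x * fst (qq n x)) /\
  is_RInt_gen (fun t => exp (- x * cosh t) * cosh ((INR n + / 2) * t))
    (at_point 0) (Rbar_locally p_infty) (c0 x * snd (qq n x)).
Proof.
  intros Hx. induction n as [|n [IH1 IH2]].
  - cbn [qq fst snd]. rewrite Rmult_1_r. split; [|apply bessel_base; auto].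
    eapply is_RInt_gen_ext; [|apply bessel_base; auto].
    apply filter_forall. intros _ t _. f_equal.
    rewrite !cosh_e. simpl. replace ((0 + / 2 - 1) * t) with (- ((0 + / 2) * t)) by field.
    rewrite Ropp_involutive. lra.
  - split.
    + cbn [qq fst snd]. eapply is_RInt_gen_ext; [|exact IH2].
      apply filter_forall. intros _ t _. f_equal. f_equal. rewrite S_INR. ring.
    + assert (H := bessel_rec x (INR n + / 2) _ _ Hx
                     ltac:(pose proof (pos_INR n); lra) IH1 IH2).
      cbn [qq fst snd].
      replace (c0 x * (fst (qq n x) + (2 * INR n + 1) / x * snd (qq n x)))
        with (c0 x * fst (qq n x) + 2 * (INR n + / 2) / x * (c0 x * snd (qq n x)))
        by (field; lra).
      eapply is_RInt_gen_ext; [|exact H].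
      apply filter_forall. intros _ t _. f_equal. f_equal. rewrite S_INR. ring.
Qed.

Lemma BesselK_eq l x : 0 < x -> BesselK (INR l + / 2) x = c0 x * snd (qq l x).
Proof.
  intros Hx. unfold BesselK. apply is_RInt_gen_unique. apply (bessel_all x l Hx).
Qed.

Definition kap := sqrt (2 / PI) * sqrt 2 * Gc.

Lemma kap_pos : 0 < kap.
Proof.
  unfold kap. pose proof PI_RGT_0. pose proof Gc_pos.
  apply Rmult_lt_0_compat; auto. apply Rmult_lt_0_compat; apply sqrt_lt_R0.
  apply Rdiv_lt_0_compat; lra. lra.
Qed.

Lemma H0_eq l x : 0 < x -> H0 l x = kap * snd (qq l x).
Proof.
  intros Hx. unfold H0. rewrite BesselK_eq by auto. unfold c0, kap.
  assert (sqrt x * sqrt (2 / x) = sqrt 2).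
  { rewrite <- sqrt_mult_alt by lra. f_equal. field. lra. }
  rewrite exp_Ropp.
  assert (0 < exp x) by apply exp_pos.
  replace (sqrt 2) with (sqrt x * sqrt (2 / x)). field. lra.
Qed.

Lemma qq_pos n x : 0 < x -> 0 < fst (qq n x) /\ 0 < snd (qq n x).
Proof.
  intros Hx. induction n as [|n [IH1 IH2]]; cbn [qq fst snd]. lra.
  split; auto. pose proof (pos_INR n).
  assert (0 < (2 * INR n + 1) / x) by (apply Rdiv_lt_0_compat; lra).
  nra.
Qed.

Lemma is_derive_eq (f : R -> R) x l l' : is_derive f x l -> l = l' -> is_derive f x l'.
Proof. intros H ->. exact H. Qed.

Lemma qq_der n x : 0 < x ->
  is_derive (fun y : R => fst (qq n y)) x
     (fst (qq n x) - snd (qq n x) + INR n / x * fst (qq n x)) /\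
  is_derive (fun y : R => snd (qq n y)) x
     (snd (qq n x) - fst (qq n x) - INR n / x * snd (qq n x)).
Proof.
  intros Hx. induction n as [|n [IH1 IH2]].
  - cbn [qq fst snd]. split; auto_derive; auto; simpl; unfold Rdiv; ring.
  - split.
    + eapply is_derive_eq. eapply is_derive_ext; [|exact IH2]. intros t; reflexivity.
      cbn [qq fst snd]. rewrite S_INR. toR. field. lra.
    + cbn [qq fst snd].
      pose (f1 := fun y : R => fst (qq n y)). pose (f2 := fun y : R => snd (qq n y)).
      change (is_derive (fun y : R => f1 y + (2 * INR n + 1) / y * f2 y) x
        (f1 x + (2 * INR n + 1) / x * f2 x - f2 x - INR (S n) / x * (f1 x + (2 * INR n + 1) / x * f2 x))).
      assert (D1 : is_derive (fun y : R => f1 y) x (f1 x - f2 x + INR n / x * f1 x)) by exact IH1.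
      assert (D2 : is_derive (fun y : R => f2 y) x (f2 x - f1 x - INR n / x * f2 x)) by exact IH2.
      clearbody f1 f2.
      auto_derive.
      { repeat split; auto; try (eexists; eassumption). lra. }
      rewrite (is_derive_unique _ _ _ D1), (is_derive_unique _ _ _ D2).
      rewrite S_INR. toR. field. lra.
Qed.

Definition Nice (h : R -> R) := exists k M, forall x, 1 <= x -> Rabs (h x) <= M * x ^ k.

Lemma Nice_const c : Nice (fun _ => c).
Proof. exists O, (Rabs c). intros. simpl. lra. Qed.
Lemma Nice_id : Nice (fun x => x).
Proof. exists 1%nat, 1. intros. simpl. rewrite Rabs_pos_eq; lra. Qed.
Lemma Nice_pow j : Nice (fun x => x ^ j).
Proof. exists j, 1. intros. rewrite Rabs_pos_eq. lra. apply pow_le. lra. Qed.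
Lemma Nice_invpow j : Nice (fun x => / x ^ j).
Proof.
  exists O, 1. intros x Hx. simpl. rewrite Rmult_1_r.
  assert (1 <= x ^ j) by (apply pow_R1_Rle; lra).
  rewrite Rabs_pos_eq. rewrite <- Rinv_1. apply Rinv_le_contravar; lra.
  left; apply Rinv_0_lt_compat; lra.
Qed.
Lemma Nice_inv : Nice (fun x => / x).
Proof.
  exists O, 1. intros x Hx. simpl. rewrite Rmult_1_r.
  rewrite Rabs_pos_eq. rewrite <- Rinv_1. apply Rinv_le_contravar; lra.
  left; apply Rinv_0_lt_compat; lra.
Qed.
Lemma Nice_plus f g : Nice f -> Nice g -> Nice (fun x => f x + g x).
Proof.
  intros [k1 [M1 H1]] [k2 [M2 H2]]. exists (k1 + k2)%nat, (Rabs M1 + Rabs M2).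
  intros x Hx. specialize (H1 x Hx). specialize (H2 x Hx).
  assert (x ^ k1 <= x ^ (k1 + k2)) by (apply Rle_pow; auto; lia).
  assert (x ^ k2 <= x ^ (k1 + k2)) by (apply Rle_pow; auto; lia).
  assert (0 <= x ^ k1) by (apply pow_le; lra).
  assert (0 <= x ^ k2) by (apply pow_le; lra).
  eapply Rle_trans. apply Rabs_triang.
  assert (M1 * x ^ k1 <= Rabs M1 * x ^ (k1 + k2)).
  { apply Rle_trans with (Rabs M1 * x ^ k1). apply Rmult_le_compat_r; auto. apply Rle_abs.
    apply Rmult_le_compat_l; auto. apply Rabs_pos. }
  assert (M2 * x ^ k2 <= Rabs M2 * x ^ (k1 + k2)).
  { apply Rle_trans with (Rabs M2 * x ^ k2). apply Rmult_le_compat_r; auto. apply Rle_abs.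
    apply Rmult_le_compat_l; auto. apply Rabs_pos. }
  lra.
Qed.
Lemma Nice_mult f g : Nice f -> Nice g -> Nice (fun x => f x * g x).
Proof.
  intros [k1 [M1 H1]] [k2 [M2 H2]]. exists (k1 + k2)%nat, (M1 * M2).
  intros x Hx. specialize (H1 x Hx). specialize (H2 x Hx).
  rewrite Rabs_mult, pow_add.
  replace (M1 * M2 * (x ^ k1 * x ^ k2)) with ((M1 * x ^ k1) * (M2 * x ^ k2)) by ring.
  apply Rmult_le_compat; auto; apply Rabs_pos.
Qed.
Lemma Nice_opp f : Nice f -> Nice (fun x => - f x).
Proof.
  intros [k [M H]]. exists k, M. intros x Hx. rewrite Rabs_Ropp. auto.
Qed.
Lemma Nice_minus f g : Nice f -> Nice g -> Nice (fun x => f x - g x).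
Proof. intros. apply Nice_plus; auto. apply Nice_opp; auto. Qed.

Lemma qq_nice n : Nice (fun x => fst (qq n x)) /\ Nice (fun x => snd (qq n x)).
Proof.
  induction n as [|n [IH1 IH2]]; cbn [qq fst snd].
  - split; apply Nice_const.
  - split; auto. apply Nice_plus; auto. apply Nice_mult; auto.
    unfold Rdiv. apply Nice_mult. apply Nice_const. apply Nice_inv.
Qed.

Lemma exp_INR_mult m y : exp (INR m * y) = exp y ^ m.
Proof.
  induction m. simpl. rewrite Rmult_0_l. apply exp_0.
  rewrite S_INR. simpl. rewrite <- IHm, <- exp_plus. f_equal. ring.
Qed.

Lemma Nice_lim h : Nice h -> filterlim (fun x => h x * exp (- x)) (Rbar_locally p_infty) (locally 0).
Proof.
  intros [k [M H]].
  set (m := S k).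
  apply lim0_bound with (Rabs M * INR m ^ m) 1.
  intros t Ht.
  assert (Hm : 0 < INR m) by (unfold m; rewrite S_INR; pose proof (pos_INR k); lra).
  assert (key : t ^ m <= INR m ^ m * exp t).
  { replace t with (INR m * (t / INR m)) at 1 by (field; lra).
    rewrite Rpow_mult_distr. apply Rmult_le_compat_l. apply pow_le; lra.
    replace (exp t) with (exp (t / INR m) ^ m).
    2:{ rewrite <- exp_INR_mult. f_equal. field. lra. }
    apply pow_incr. split. apply Rlt_le, Rdiv_lt_0_compat; lra.
    pose proof (exp_ineq1_le (t / INR m)). lra. }
  specialize (H t ltac:(lra)).
  rewrite Rabs_mult, (Rabs_pos_eq (exp (- t))) by (left; apply exp_pos).
  rewrite exp_Ropp.
  assert (0 < exp t) by apply exp_pos.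
  assert (0 <= t ^ k) by (apply pow_le; lra).
  apply Rle_trans with (Rabs M * t ^ k * / exp t).
  { apply Rmult_le_compat_r. left; apply Rinv_0_lt_compat; lra.
    eapply Rle_trans; [exact H|]. apply Rmult_le_compat_r; auto. apply Rle_abs. }
  unfold m in key. simpl in key. unfold m.
  apply (Rmult_le_reg_r (exp t * t)). nra.
  replace (Rabs M * t ^ k * / exp t * (exp t * t)) with (Rabs M * (t * t ^ k)) by (field; lra).
  replace (Rabs M * INR (S k) ^ S k / t * (exp t * t)) with (Rabs M * (INR (S k) ^ S k * exp t)) by (field; lra).
  apply Rmult_le_compat_l. apply Rabs_pos. exact key.
Qed.

Lemma pw_ex : {f : nat -> R -> R | forall l x, f l x = x ^ l}.
Proof. exists (fun l x => x ^ l). reflexivity. Qed.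
Definition pw := proj1_sig pw_ex.
Lemma pw_spec l x : pw l x = x ^ l.
Proof. unfold pw. destruct pw_ex. simpl. auto. Qed.
Definition Q l y := snd (qq l y).
Definition Q1 l y := snd (qq (S l) y).

Lemma pw_der l x : x <> 0 -> is_derive (fun y : R => pw l y) x (INR l * pw l x / x).
Proof.
  intros Hx. eapply is_derive_ext. intros t. symmetry. apply pw_spec.
  rewrite pw_spec. auto_derive. auto. destruct l; simpl. toR; field; auto.
  toR. field. auto.
Qed.

Lemma pw_nz l x : 0 < x -> pw l x <> 0.
Proof. intros. rewrite pw_spec. apply pow_nonzero. lra. Qed.

Lemma Q_der l y : 0 < y -> is_derive (fun t : R => Q l t) y (Q l y - Q1 l y + (INR l + 1) / y * Q l y).
Proof.
  intros Hy. destruct (qq_der (S l) y Hy) as [H _].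
  eapply is_derive_eq. eapply is_derive_ext; [|exact H]. intros t. reflexivity.
  unfold Q, Q1. rewrite S_INR. reflexivity.
Qed.

Lemma Q1_der l y : 0 < y -> is_derive (fun t : R => Q1 l t) y (Q1 l y - Q l y - (INR l + 1) / y * Q1 l y).
Proof.
  intros Hy. destruct (qq_der (S l) y Hy) as [_ H].
  eapply is_derive_eq. eapply is_derive_ext; [|exact H]. intros t. reflexivity.
  unfold Q, Q1. rewrite S_INR. reflexivity.
Qed.

Lemma Q_pos l y : 0 < y -> 0 < Q l y.
Proof. intros. unfold Q. apply qq_pos; auto. Qed.
Lemma Q1_pos l y : 0 < y -> 0 < Q1 l y.
Proof. intros. unfold Q1. apply qq_pos; auto. Qed.

Definition G0p l z e := (e * pw l e * / pw l z - z * pw l z * / pw l e) * / (2 * INR l + 1).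
Definition g0e l z e := ((INR l + 1) * pw l e * / pw l z + INR l * z * pw l z * / e * / pw l e) * / (2 * INR l + 1).
Definition d0 l z e := (- INR l * e * pw l e * / (z * pw l z) - (INR l + 1) * pw l z * / pw l e) * / (2 * INR l + 1).
Definition d0e l z e := (- INR l * (INR l + 1) * pw l e * / (z * pw l z) + INR l * (INR l + 1) * pw l z * / e * / pw l e) * / (2 * INR l + 1).
Definition Kc l z := exp z / Q l z.

Definition Phi1 l z e := Kc l z * (G0p l z e * (- Q1 l e + (INR l + 1) * / e * Q l e) - g0e l z e * Q l e) * exp (- e).
Definition I1 l z e := Kc l z * G0p l z e * Q l e * exp (- e).
Definition Phi2 l z e := Kc l z * (d0 l z e * (- Q1 l e + (INR l + 1) * / e * Q l e) - d0e l z e * Q l e) * exp (- e).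
Definition I2 l z e := Kc l z * d0 l z e * Q l e * exp (- e).

Lemma den_pos l : 0 < 2 * INR l + 1.
Proof. pose proof (pos_INR l). lra. Qed.

Ltac side1 := match goal with
  | |- True => exact I
  | |- ex_derive (fun x : R => pw _ x) _ => eexists; apply pw_der; lra
  | |- ex_derive (fun x : R => Q _ x) _ => eexists; apply Q_der; lra
  | |- ex_derive (fun x : R => Q1 _ x) _ => eexists; apply Q1_der; lra
  | |- pw _ _ <> 0 => apply pw_nz; lra
  | |- _ <> 0 => lra
  end.
Ltac sides := repeat match goal with |- _ /\ _ => split end; side1.

Ltac rwD l e He :=
  rewrite ?(is_derive_unique _ _ _ (pw_der l e ltac:(lra))),
          ?(is_derive_unique _ _ _ (Q_der l e He)),
          ?(is_derive_unique _ _ _ (Q1_der l e He)).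
Ltac prep l z e Hz He :=
  assert (pw l e <> 0) by (apply pw_nz; lra);
  assert (pw l z <> 0) by (apply pw_nz; lra);
  assert (2 * INR l + 1 <> 0) by (pose proof (den_pos l); lra);
  assert (z <> 0) by lra; assert (e <> 0) by lra.
Ltac nzs := repeat split; auto.

Lemma Phi1_der l z e : 0 < z -> 0 < e -> is_derive (fun t => Phi1 l z t) e (I1 l z e).
Proof.
  intros Hz He. unfold Phi1, I1, G0p, g0e.
  auto_derive.
  { sides. }
  rwD l e He.
  prep l z e Hz He. toR. field. nzs.
Qed.

Lemma Phi2_der l z e : 0 < z -> 0 < e -> is_derive (fun t => Phi2 l z t) e (I2 l z e).
Proof.
  intros Hz He. unfold Phi2, I2, d0, d0e.
  auto_derive.
  { sides. }
  rwD l e He.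
  prep l z e Hz He. toR. field. nzs.
Qed.

Lemma G0_eq l z e : G0 l z e = G0p l z e.
Proof.
  unfold G0, G0p. rewrite !pw_spec, !pow_add. simpl. unfold Rdiv. ring.
Qed.

Lemma dG0 l z e : 0 < z -> 0 < e -> is_derive (fun t : R => G0 l t e) z (d0 l z e).
Proof.
  intros Hz He. eapply is_derive_ext. intros t. symmetry. apply G0_eq.
  unfold G0p, d0. auto_derive.
  { sides. }
  rwD l z Hz.
  prep l z e Hz He. toR. field. nzs.
Qed.

Lemma I1_cont l z e : 0 < z -> 0 < e -> continuous (I1 l z) e.
Proof.
  intros Hz He. apply contD. unfold I1, G0p. auto_derive. sides.
Qed.

Lemma I2_cont l z e : 0 < z -> 0 < e -> continuous (I2 l z) e.
Proof.
  intros Hz He. apply contD. unfold I2, d0. auto_derive. sides.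
Qed.

Lemma Nice_ext' (f g : R -> R) : (forall x, f x = g x) -> Nice g -> Nice f.
Proof. intros H [k [M HM]]. exists k, M. intros x Hx. rewrite H. auto. Qed.

Lemma Nice_pw l : Nice (fun x => pw l x).
Proof. apply Nice_ext' with (g := fun x => x ^ l). intros; apply pw_spec. apply Nice_pow. Qed.

Lemma Nice_invpw l : Nice (fun x => / pw l x).
Proof. apply Nice_ext' with (g := fun x => / x ^ l). intros; now rewrite pw_spec. apply Nice_invpow. Qed.
Lemma Nice_Q l : Nice (fun x => Q l x).
Proof. apply (qq_nice l). Qed.
Lemma Nice_Q1 l : Nice (fun x => Q1 l x).
Proof. apply (qq_nice (S l)). Qed.

Ltac nice := repeat first [ apply Nice_const | apply Nice_id | apply Nice_inv | apply Nice_invpw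
  | apply Nice_pw | apply Nice_Q | apply Nice_Q1 | apply Nice_plus | apply Nice_minus
  | apply Nice_mult | apply Nice_opp ].

Lemma Phi1_lim l z : filterlim (fun t => Phi1 l z t) (Rbar_locally p_infty) (locally 0).
Proof. unfold Phi1, G0p, g0e. apply Nice_lim. nice. Qed.
Lemma Phi2_lim l z : filterlim (fun t => Phi2 l z t) (Rbar_locally p_infty) (locally 0).
Proof. unfold Phi2, d0, d0e. apply Nice_lim. nice. Qed.

Lemma ext_after (z : R) (f g : R -> R) v :
  (forall x, z < x -> f x = g x) ->
  is_RInt_gen f (at_point z) (Rbar_locally p_infty) v ->
  is_RInt_gen g (at_point z) (Rbar_locally p_infty) v.
Proof.
  intros H. apply is_RInt_gen_ext.
  apply Filter_prod with (fun x => x = z) (fun b => z < b).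
  - reflexivity.
  - exists z; auto.
  - intros x y -> Hy t Ht. simpl in Ht. rewrite Rmin_left in Ht by lra. apply H; lra.
Qed.

Lemma H0_eq' l x : 0 < x -> H0 l x = kap * Q l x.
Proof. intros. rewrite H0_eq; auto. Qed.

Lemma val_eq (f : R -> R) a v v' :
  is_RInt_gen f (at_point a) (Rbar_locally p_infty) v -> v = v' ->
  is_RInt_gen f (at_point a) (Rbar_locally p_infty) v'.
Proof. intros H ->; exact H. Qed.

Theorem lemma46 (l : nat) (zeta : R) (hz : 0 < zeta) :
  is_RInt_gen (fun eta => exp (- eta + zeta) * G0 l zeta eta * (H0 l eta / H0 l zeta))
    (at_point zeta) (Rbar_locally p_infty) 1
  /\
  is_RInt_gen (fun eta => exp (- eta + zeta) * Derive (fun z => G0 l z eta) zeta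
                          * (H0 l eta / H0 l zeta))
    (at_point zeta) (Rbar_locally p_infty)
    (-1 + Derive (H0 l) zeta / H0 l zeta).
Proof.
  pose proof kap_pos as Hk.
  pose proof (Q_pos l zeta hz) as HQz.
  assert (Hpw : pw l zeta <> 0) by (apply pw_nz; lra).
  assert (Hden : 2 * INR l + 1 <> 0) by (pose proof (den_pos l); lra).
  assert (Hez : 0 < exp zeta) by apply exp_pos.
  split.
  - assert (HI := antideriv (Phi1 l zeta) (I1 l zeta) 0 zeta 0 hz
                   (fun x hx => Phi1_der l zeta x hz hx)
                   (fun x hx => I1_cont l zeta x hz hx) (Phi1_lim l zeta)).
    eapply ext_after; [|eapply val_eq; [exact HI|]].
    + intros x Hx. assert (0 < x) by lra. pose proof (Q_pos l x ltac:(lra)).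
      rewrite G0_eq, !H0_eq' by lra. unfold I1, Kc.
      replace (- x + zeta) with (zeta + - x) by ring. rewrite exp_plus.
      toR. field. lra.
    + unfold Phi1, G0p, g0e, Kc. rewrite exp_Ropp. toR. field. lra.
  - assert (HI := antideriv (Phi2 l zeta) (I2 l zeta) 0 zeta 0 hz
                   (fun x hx => Phi2_der l zeta x hz hx)
                   (fun x hx => I2_cont l zeta x hz hx) (Phi2_lim l zeta)).
    assert (HD : is_derive (H0 l) zeta (kap * (Q l zeta - Q1 l zeta + (INR l + 1) / zeta * Q l zeta))).
    { apply is_derive_ext_loc with (fun t => kap * Q l t).
      - apply filter_imp with (fun t => 0 < t).
        + intros t Ht. symmetry. apply H0_eq'; auto.
        + apply open_gt. exact hz.
      - auto_derive. sides. rwD l zeta hz. toR. ring. }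
    rewrite (is_derive_unique _ _ _ HD).
    eapply ext_after; [|eapply val_eq; [exact HI|]].
    + intros x Hx. assert (0 < x) by lra. pose proof (Q_pos l x ltac:(lra)).
      rewrite (is_derive_unique _ _ _ (dG0 l zeta x hz ltac:(lra))).
      rewrite !H0_eq' by lra. unfold I2, Kc.
      replace (- x + zeta) with (zeta + - x) by ring. rewrite exp_plus.
      toR. field. lra.
    + rewrite H0_eq' by lra.
      unfold Phi2, d0, d0e, Kc. rewrite exp_Ropp. toR. field. lra.
Qed.
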